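(* Let $\mathbb{F}\in\{\mathbb{R},\mathbb{C}\}$ and let $\mathcal{P}(M,N)$ be the set of Parseval frames for $\mathbb{F}^N$ with $M$ vectors. For each $M>N$ there exist constants $0<c\leq d<1$, depending only on $M$ and $N$, such that whenever $\Phi=\{\varphi_i\}_{i=1}^M\in\mathcal{P}(M,N)$ maximizes $TC$ over $\mathcal{P}(M,N)$, we have $c\leq\|\varphi_i\|\leq d$ for every $i=1,\dots,M$.
   Context: A Parseval frame for $\mathbb{F}^N$ is a family $\{\varphi_i\}_{i=1}^M\subseteq\mathbb{F}^N$ whose $N\times M$ matrix $\Phi$ (columns $\varphi_i$) satisfies $\Phi\Phi^*=I$. The total coherence is $TC(\Phi)=\sum_{i\neq j}|\langle\varphi_i,\varphi_j\rangle|$. *)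

(* Defs.v *)
From HB Require Import structures.
From mathcomp Require Import all_boot all_order all_algebra.
From mathcomp Require Import reals complex.
Set Implicit Arguments. Unset Strict Implicit. Unset Printing Implicit Defensive.
Import Order.TTheory GRing.Theory Num.Theory.
Local Open Scope ring_scope.

(* A frame is an N x M matrix Phi whose columns are the frame vectors
   phi_i.  The scalar field is encoded by a predicate S on entries:
   S = predT gives F = C, S = Num.real gives F = the reals inside C. *)

Section Frames.
Variable C : numClosedFieldType.

Definition adjmx (m n : nat) (A : 'M[C]_(m, n)) : 'M[C]_(n, m) :=
  \matrix_(i, j) (A j i)^*.

Definition fdot (N M : nat) (Phi : 'M[C]_(N, M)) (i j : 'I_M) : C :=
  \sum_(k < N) Phi k i * (Phi k j)^*.

Definition fnorm (N M : nat) (Phi : 'M[C]_(N, M)) (i : 'I_M) : C :=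
  sqrtC (\sum_(k < N) `|Phi k i| ^+ 2).

Definition TC (N M : nat) (Phi : 'M[C]_(N, M)) : C :=
  \sum_(i < M) \sum_(j < M | j != i) `|fdot Phi i j|.

Definition parseval (S : pred C) (N M : nat) (Phi : 'M[C]_(N, M)) : Prop :=
  (forall k i, S (Phi k i)) /\ Phi *m adjmx Phi = 1%:M.

Definition TC_maximizer (S : pred C) (N M : nat) (Phi : 'M[C]_(N, M)) : Prop :=
  parseval S Phi /\ forall Psi : 'M[C]_(N, M), parseval S Psi -> TC Psi <= TC Phi.

End Frames.

Definition scalars (R : realType) (is_real : bool) : pred R[i] :=
  if is_real then [pred z : R[i] | z \is Num.real] else predT.

(* Main.v *)
Require Import Defs.
From HB Require Import structures.
From mathcomp Require Import all_boot all_order all_algebra.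
From mathcomp Require Import reals complex ring lra.
Import Order.TTheory GRing.Theory Num.Theory.
Set Implicit Arguments. Unset Strict Implicit. Unset Printing Implicit Defensive.
Local Open Scope ring_scope.

Section Gen.
Variable C : numClosedFieldType.

Lemma sum3 (V : zmodType) (M : nat) (f : 'I_M -> V) (i j : 'I_M) : i != j ->
  \sum_l f l = f i + f j + \sum_(l | (l != i) && (l != j)) f l.
Proof.
move=> hij; rewrite (bigD1 i) //= (bigD1 j) /=; last by rewrite eq_sym.
by rewrite addrA.
Qed.

Lemma bigD1C (V : zmodType) (M : nat) (f : 'I_M -> V) (i : 'I_M) :
  \sum_l f l = f i + \sum_(l | l != i) f l.
Proof. by rewrite (bigD1 i). Qed.

Lemma fdot_conj N M (Phi : 'M[C]_(N, M)) a b : (fdot Phi a b)^* = fdot Phi b a.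
Proof.
rewrite /fdot rmorph_sum; apply: eq_bigr => k _.
by rewrite rmorphM /= conjCK mulrC.
Qed.


Lemma fdot_norm_sym N M (Phi : 'M[C]_(N, M)) a b : `|fdot Phi a b| = `|fdot Phi b a|.
Proof. by rewrite -fdot_conj norm_conjC. Qed.

Lemma fdot_diag N M (Phi : 'M[C]_(N, M)) a : fdot Phi a a = \sum_k `|Phi k a| ^+ 2.
Proof. by apply: eq_bigr => k _; rewrite normCK. Qed.

Lemma fdot_diag_ge0 N M (Phi : 'M[C]_(N, M)) a : 0 <= fdot Phi a a.
Proof. rewrite fdot_diag; apply: sumr_ge0 => k _; exact: exprn_ge0. Qed.

Lemma trace_parseval S N M (Phi : 'M[C]_(N, M)) : parseval S Phi ->
  \sum_a fdot Phi a a = N%:R.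
Proof.
case=> _ hP.
have h k : \sum_a Phi k a * (Phi k a)^* = 1.
  have := congr1 (fun A : 'M[C]_N => A k k) hP.
  rewrite /= !mxE eqxx mulr1n => <-; apply: eq_bigr => a _; by rewrite mxE.
rewrite /fdot exchange_big /=.
rewrite (eq_bigr (fun _ => 1)); last by move=> k _; exact: h.
by rewrite sumr_const card_ord.
Qed.

Lemma proj_parseval S N M (Phi : 'M[C]_(N, M)) i : parseval S Phi ->
  \sum_m `|fdot Phi i m| ^+ 2 = fdot Phi i i.
Proof.
case=> _ hP.
set B := adjmx Phi.
have hG : (B *m Phi) *m (B *m Phi) = B *m Phi.
  by rewrite mulmxA -(mulmxA B) hP mulmx1.
have e1 a b : (B *m Phi) a b = fdot Phi b a.
  rewrite mxE /fdot; apply: eq_bigr => k _; by rewrite mxE mulrC.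
have := congr1 (fun A : 'M[C]_M => A i i) hG.
rewrite /= e1 mxE => <-; apply: eq_bigr => m _.
by rewrite !e1 normCK fdot_conj mulrC.
Qed.


Lemma cjB (x y : C) : (x - y)^* = x^* - y^*.
Proof. exact: (rmorphB Num.conj_op). Qed.
Lemma cjD (x y : C) : (x + y)^* = x^* + y^*.
Proof. exact: (rmorphD Num.conj_op). Qed.
Lemma cjN (x : C) : (- x)^* = - x^*.
Proof. exact: (rmorphN Num.conj_op). Qed.
Lemma cjM (x y : C) : (x * y)^* = x^* * y^*.
Proof. exact: (rmorphM Num.conj_op). Qed.

Definition rr : C := (sqrtC 2)^-1.

Lemma rr_ge0 : 0 <= rr.
Proof. by rewrite /rr invr_ge0 sqrtC_ge0 ler0n. Qed.

Lemma rr_conj : rr^* = rr.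
Proof. exact: geC0_conj rr_ge0. Qed.

Lemma rr2 : rr * rr * 2 = 1.
Proof.
rewrite /rr -expr2 exprVn sqrtCK mulVf //.
by rewrite pnatr_eq0.
Qed.

Lemma rr2' : 1 <= rr * 2.
Proof.
have h1 : 1 <= sqrtC (2 : C).
  by rewrite -{1}sqrtC1 ler_sqrtC ?qualifE /= ?ler0n ?ler1n // ler1n.
have h2 : 0 < sqrtC (2 : C) by apply: lt_le_trans h1.
have -> : rr * 2 = sqrtC 2.
  rewrite /rr -{2}(sqrtCK 2) expr2 mulrA mulVf ?mul1r //.
  by rewrite gt_eqF.
exact: h1.
Qed.

Lemma L_diag (x y : C) : (x+y)*rr*((x+y)*rr)^* + (y-x)*rr*((y-x)*rr)^* = x*x^* + y*y^*.
Proof. rewrite !cjM !cjD !cjN rr_conj -[RHS]mul1r -rr2; ring. Qed.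
Lemma L_off (x y : C) : (x+y)*rr*((y-x)*rr)^* + (y-x)*rr*((x+y)*rr)^* = y*y^* - x*x^*.
Proof. rewrite !cjM !cjD !cjN rr_conj -[RHS]mul1r -rr2; ring. Qed.
Lemma L_par (x y u v : C) : (x+y)*rr*((u+v)*rr)^* + (y-x)*rr*((v-u)*rr)^* = x*u^* + y*v^*.
Proof. rewrite !cjM !cjD !cjN rr_conj -[RHS]mul1r -rr2; ring. Qed.

Definition frot N M (Phi : 'M[C]_(N, M)) (i j : 'I_M) : 'M[C]_(N, M) :=
  \matrix_(k, l) (if l == i then (Phi k i + Phi k j) * rr
                  else if l == j then (Phi k j - Phi k i) * rr else Phi k l).

End Gen.

Section Rot.
Variable C : numClosedFieldType.
Variables (N M : nat) (Phi : 'M[C]_(N, M)) (i j : 'I_M).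
Hypothesis hij : i != j.
Local Notation Psi := (frot Phi i j).
Local Notation G := (fdot Phi).
Local Notation G' := (fdot Psi).

Lemma hji : j != i. Proof. by rewrite eq_sym. Qed.

Lemma rotE k l : Psi k l = (if l == i then (Phi k i + Phi k j) * (rr C)
                  else if l == j then (Phi k j - Phi k i) * (rr C) else Phi k l).
Proof. by rewrite mxE. Qed.

Lemma rot_i k : Psi k i = (Phi k i + Phi k j) * (rr C).
Proof. by rewrite rotE eqxx. Qed.
Lemma rot_j k : Psi k j = (Phi k j - Phi k i) * (rr C).
Proof. by rewrite rotE eqxx (negbTE hji). Qed.
Lemma rot_o k l : l != i -> l != j -> Psi k l = Phi k l.
Proof. by move=> h1 h2; rewrite rotE (negbTE h1) (negbTE h2). Qed.

Lemma G'oo a b : a != i -> a != j -> b != i -> b != j -> G' a b = G a b.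
Proof.
move=> a1 a2 b1 b2; apply: eq_bigr => k _; by rewrite !rot_o.
Qed.

Lemma G'oi a : a != i -> a != j -> G' a i = (G a i + G a j) * (rr C).
Proof.
move=> a1 a2; rewrite /fdot -big_split mulr_suml /=; apply: eq_bigr => k _.
rewrite rot_o // rot_i cjM cjD rr_conj; ring.
Qed.

Lemma G'oj a : a != i -> a != j -> G' a j = (G a j - G a i) * (rr C).
Proof.
move=> a1 a2; rewrite /fdot -sumrB mulr_suml /=; apply: eq_bigr => k _.
rewrite rot_o // rot_j cjM cjB rr_conj; ring.
Qed.

Lemma G'io b : b != i -> b != j -> G' i b = (G i b + G j b) * (rr C).
Proof.
move=> a1 a2; rewrite /fdot -big_split mulr_suml /=; apply: eq_bigr => k _.
rewrite (rot_o _ a1 a2) rot_i; ring.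
Qed.

Lemma G'jo b : b != i -> b != j -> G' j b = (G j b - G i b) * (rr C).
Proof.
move=> a1 a2; rewrite /fdot -sumrB mulr_suml /=; apply: eq_bigr => k _.
rewrite (rot_o _ a1 a2) rot_j; ring.
Qed.

Lemma G'diag : G' i i + G' j j = G i i + G j j.
Proof.
rewrite /fdot -!big_split /=; apply: eq_bigr => k _.
rewrite rot_i rot_j; exact: L_diag.
Qed.

Lemma G'off : G' i j + G' j i = G j j - G i i.
Proof.
rewrite /fdot -big_split -sumrB /=; apply: eq_bigr => k _.
rewrite rot_i rot_j; exact: L_off.
Qed.

Lemma rot_parseval S : parseval S Phi ->
  (forall k, S (Psi k i) /\ S (Psi k j)) -> parseval S Psi.
Proof.
case=> hS hP hSr; split.
  move=> k l; have [->|n1] := eqVneq l i; first by case: (hSr k).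
  have [->|n2] := eqVneq l j; first by case: (hSr k).
  by rewrite rot_o //; exact: hS.
have e (A B : 'M[C]_(N, M)) k l :
    (A *m adjmx B) k l = \sum_m A k m * (B l m)^*.
  rewrite mxE; apply: eq_bigr => m _; by rewrite mxE.
rewrite -[X in _ = X]hP; apply/matrixP => k l; rewrite !e.
rewrite (sum3 _ hij) [in RHS](sum3 _ hij).
congr (_ + _); last first.
  apply: eq_bigr => m /andP[m1 m2]; by rewrite !rot_o.
rewrite !rot_i !rot_j; exact: L_par.
Qed.


Lemma decomp (g : 'I_M -> 'I_M -> C) :
  \sum_a \sum_b g a b = (g i i + g i j + (g j i + g j j))
    + \sum_(b | (b != i) && (b != j)) (g i b + g j b)
    + \sum_(a | (a != i) && (a != j)) (g a i + g a j)
    + \sum_(a | (a != i) && (a != j)) \sum_(b | (b != i) && (b != j)) g a b.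
Proof.
under eq_bigr => a _ do rewrite (sum3 (g a) hij).
rewrite (sum3 _ hij) /= big_split /= big_split /= big_split /=.
ring.
Qed.

Lemma Lpair (x y : C) : `|y| - `|x| <= `|(x+y)*rr C| + `|(y-x)*rr C|.
Proof.
rewrite !normrM (ger0_norm (rr_ge0 C)) -mulrDl.
apply: le_trans (_ : `|y| <= _).
  by rewrite lerBlDr lerDl normr_ge0.
apply: le_trans (_ : `|y| * (rr C * 2) <= _).
  by rewrite ler_peMr ?normr_ge0 ?rr2'.
have -> : `|y| * (rr C * 2) = `|2%:R * y| * rr C.
  by rewrite normrM normr_nat; ring.
rewrite ler_wpM2r ?rr_ge0 //.
have -> : (2%:R * y) = (x + y) + (y - x) by ring.
exact: ler_normD.
Qed.

Lemma rot_gain :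
  \sum_a \sum_b `|G a b| + `|G j j - G i i| - 4 * \sum_(a | a != i) `|G a i|
  <= \sum_a \sum_b `|G' a b|.
Proof.
rewrite (decomp (fun a b => `|G a b|)) (decomp (fun a b => `|G' a b|)) /=.
have h1 : G i i + G j j + `|G j j - G i i|
    <= `|G' i i| + `|G' i j| + (`|G' j i| + `|G' j j|).
  rewrite (ger0_norm (fdot_diag_ge0 Psi i)) (ger0_norm (fdot_diag_ge0 Psi j)).
  rewrite -G'diag -G'off.
  apply: le_trans (lerD (lexx (G' i i + G' j j)) (ler_normD _ _)) _.
  rewrite le_eqVlt; apply/orP; left; apply/eqP; ring.
have h2 : \sum_(b | (b != i) && (b != j)) (`|G i b| + `|G j b| - 2 * `|G b i|)
    <= \sum_(b | (b != i) && (b != j)) (`|G' i b| + `|G' j b|).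
  apply: ler_sum => b /andP[b1 b2].
  rewrite G'io // G'jo // (fdot_norm_sym Phi b i).
  have -> : `|G i b| + `|G j b| - 2 * `|G i b| = `|G j b| - `|G i b| by ring.
  exact: Lpair.
have h3 : \sum_(a | (a != i) && (a != j)) (`|G a i| + `|G a j| - 2 * `|G a i|)
    <= \sum_(a | (a != i) && (a != j)) (`|G' a i| + `|G' a j|).
  apply: ler_sum => a /andP[a1 a2].
  rewrite G'oi // G'oj //.
  have -> : `|G a i| + `|G a j| - 2 * `|G a i| = `|G a j| - `|G a i| by ring.
  exact: Lpair.
have h4 : \sum_(a | (a != i) && (a != j)) \sum_(b | (b != i) && (b != j)) `|G' a b|
   = \sum_(a | (a != i) && (a != j)) \sum_(b | (b != i) && (b != j)) `|G a b|.
  apply: eq_bigr => a /andP[a1 a2]; apply: eq_bigr => b /andP[b1 b2].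
  by rewrite G'oo.
rewrite h4.
apply: le_trans (lerD (lerD (lerD h1 h2) h3) (lexx _)).
rewrite !sumrB -!mulr_sumr.
rewrite [\sum_(a | a != i) _](bigD1 j) /=; last exact: hji.
rewrite (fdot_norm_sym Phi i j).
rewrite (ger0_norm (fdot_diag_ge0 Phi i)) (ger0_norm (fdot_diag_ge0 Phi j)).
rewrite -subr_ge0.
set e := (X in _ <= X).
have -> : e = 2 * `|G j i| by rewrite /e; ring.
by rewrite mulr_ge0 ?normr_ge0 ?ler0n.
Qed.

End Rot.

Section CS.
Variable C : numClosedFieldType.

Lemma CS_full M (f : 'I_M -> C) : (forall k, 0 <= f k) ->
  (\sum_k f k) ^+ 2 <= M%:R * \sum_k f k ^+ 2.
Proof.
move=> hf.
rewrite expr2 mulr_suml.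
under eq_bigr => a _ do rewrite mulr_sumr.
apply: le_trans (_ : _ <= \sum_a \sum_b (f a ^+ 2 + f b ^+ 2) / 2) _.
  apply: ler_sum => a _; apply: ler_sum => b _.
  exact: (real_leif_mean_square (ger0_real (hf a)) (ger0_real (hf b))).1.
under eq_bigr => a _ do rewrite -mulr_suml big_split /= sumr_const card_ord.
rewrite -mulr_suml big_split /= sumrMnl sumr_const card_ord.
rewrite le_eqVlt; apply/orP; left; apply/eqP.
set x := \sum_(i < M) f i ^+ 2.
rewrite -mulrnDr addnn -muln2 mulrnA -[(x *+ M) *+ 2]mulr_natl mulrC mulKf.
  by rewrite mulr_natl.
by rewrite pnatr_eq0.
Qed.

Lemma CS_filt M (P : pred 'I_M) (f : 'I_M -> C) : (forall k, 0 <= f k) ->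
  (\sum_(k | P k) f k) ^+ 2 <= M%:R * \sum_(k | P k) f k ^+ 2.
Proof.
move=> hf; rewrite big_mkcond [X in _ <= _ * X]big_mkcond /=.
have -> : \sum_k (if P k then f k ^+ 2 else 0) = \sum_k (if P k then f k else 0) ^+ 2.
  by apply: eq_bigr => k _; case: (P k); rewrite ?expr0n.
apply: CS_full => k; case: (P k) => //.
Qed.

End CS.

Section Main.
Variable C : numClosedFieldType.
Variables (S : pred C) (N M : nat) (Phi : 'M[C]_(N, M)).
Hypothesis hmax : TC_maximizer S Phi.
Hypothesis hS : forall x y, S x -> S y -> S ((x + y) * rr C) /\ S ((y - x) * rr C).
Local Notation G := (fdot Phi).

Definition Dsum (X : 'M[C]_(N, M)) := \sum_a \sum_b `|fdot X a b|.

Lemma TC_D X : parseval S X -> TC X = Dsum X - N%:R.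
Proof.
move=> hX; rewrite -(trace_parseval hX) /TC /Dsum.
have E a : \sum_b `|fdot X a b| = fdot X a a + \sum_(b | b != a) `|fdot X a b|.
  by rewrite (bigD1 a) //= (ger0_norm (fdot_diag_ge0 X a)).
rewrite (eq_bigr _ (fun a _ => E a)) big_split /= addrAC subrr add0r.
by apply: eq_bigr => a _; apply: eq_big.
Qed.

Lemma bound_j i j : j != i ->
  `|G j j - G i i| <= 4 * \sum_(a | a != i) `|G a i|.
Proof.
move=> hji; have hij : i != j by rewrite eq_sym.
case: hmax => hP hM.
have hPsi : parseval S (frot Phi i j).
  apply: (rot_parseval hij hP) => k; rewrite rot_i rot_j //.
  by apply: hS; case: hP => h _; apply: h.
have := hM _ hPsi; rewrite (TC_D hP) (TC_D hPsi) lerD2r => hle.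
have := le_trans (rot_gain Phi hij) hle.
by rewrite /Dsum -addrA -[X in _ <= X]addr0 lerD2l subr_le0.
Qed.

Lemma bound_all i j : `|G j j - G i i| <= 4 * \sum_(a | a != i) `|G a i|.
Proof.
have [->|hji] := eqVneq j i; last exact: bound_j.
rewrite subrr normr0 mulr_ge0 ?ler0n //.
by apply: sumr_ge0 => a _; exact: normr_ge0.
Qed.

Lemma key i : (N%:R - M%:R * G i i) ^+ 2 <= 16%:R * M%:R ^+ 3 * (G i i - G i i ^+ 2).
Proof.
case: (hmax) => hP _.
set a := G i i; set s := \sum_(k | k != i) `|G k i|.
have s0 : 0 <= s by apply: sumr_ge0 => k _; exact: normr_ge0.
have hQ : \sum_(k | k != i) `|G k i| ^+ 2 = a - a ^+ 2.
  have := proj_parseval i hP; rewrite (bigD1C _ i) (ger0_norm (fdot_diag_ge0 Phi i)) => E.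
  have -> : \sum_(k | k != i) `|G k i| ^+ 2 = \sum_(k | k != i) `|G i k| ^+ 2.
    by apply: eq_bigr => k _; rewrite fdot_norm_sym.
  apply/eqP; rewrite /a eq_sym subr_eq addrC E //.
have hsum : `|N%:R - M%:R * a| <= M%:R * (4 * s).
  have -> : N%:R - M%:R * a = \sum_j (G j j - a).
    by rewrite sumrB (trace_parseval hP) sumr_const card_ord mulr_natl.
  apply: le_trans (ler_norm_sum _ _ _) _.
  apply: le_trans (_ : _ <= \sum_(j < M) 4 * s) _.
    by apply: ler_sum => j _; exact: bound_all.
  by rewrite sumr_const card_ord -[_ *+ M]mulr_natl lexx.
have hCS : s ^+ 2 <= M%:R * (a - a ^+ 2).
  rewrite -hQ; apply: CS_filt.
  by move=> k; exact: normr_ge0.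
have a0 : 0 <= a by exact: fdot_diag_ge0.
have hr : N%:R - M%:R * a \is Num.real.
  by rewrite rpredB ?rpredM ?realn // ger0_real.
have h1 : `|N%:R - M%:R * a| ^+ 2 <= (M%:R * (4 * s)) ^+ 2.
  rewrite !expr2; apply: ler_pM => //; exact: normr_ge0.
rewrite real_normK // in h1.
apply: le_trans h1 _.
have -> : (M%:R * (4 * s)) ^+ 2 = 16%:R * M%:R ^+ 2 * s ^+ 2 :> C by ring.
have -> : 16%:R * M%:R ^+ 3 * (a - a ^+ 2) = 16%:R * M%:R ^+ 2 * (M%:R * (a - a ^+ 2)) :> C by ring.
by rewrite ler_wpM2l // mulr_ge0 ?ler0n ?exprn_ge0 ?ler0n.
Qed.

End Main.

Lemma numeric (R : realType) (m n t a : R) :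
  1 <= n -> n + 1 <= m -> 0 < t -> t * 16 * m ^+ 2 = 1 ->
  (n - m * a) ^+ 2 <= 16 * m ^+ 3 * (a - a ^+ 2) ->
  t ^+ 2 <= a /\ a <= 1 - t ^+ 2.
Proof.
move=> hn hm ht ht1 hk.
have m2 : 2 <= m by lra.
set p := m * t.
have p0 : 0 <= p by rewrite /p mulr_ge0 //; lra.
have hp : p * (16 * m) = t * 16 * m ^+ 2 by rewrite /p; ring.
rewrite ht1 in hp.
have p32 : p <= 1 / 32.
  have := mulr_ge0 p0 (_ : 0 <= m - 2); lra.
have t16 : t <= 1 / 32.
  have : 0 <= t * (m - 1) by rewrite mulr_ge0 //; lra.
  rewrite /p in p32; lra.
have ke : 16 * m ^+ 3 * t ^+ 2 = p * (t * 16 * m ^+ 2) by rewrite /p; ring.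
rewrite ht1 mulr1 in ke.
have k0 : 0 < 16 * m ^+ 3 by rewrite !mulr_gt0 ?exprn_gt0 //; lra.
have pt : p * t <= 1 / 1024.
  have := ler_pM p0 (ltW ht) p32 t16; lra.
split.
  rewrite leNgt; apply/negP => ha.
  have h1 : m * a <= p * t.
    rewrite /p -mulrA; apply: ler_wpM2l; first lra.
    rewrite expr2 in ha; lra.
  have h2 : 16 * m ^+ 3 * (a - a ^+ 2) <= 16 * m ^+ 3 * a.
    apply: ler_wpM2l; first exact: ltW.
    have := sqr_ge0 a; lra.
  have h3 : 16 * m ^+ 3 * a < 16 * m ^+ 3 * t ^+ 2 by rewrite ltr_pM2l.
  have h4 : 1 / 2 <= n - m * a by lra.
  have := ler_pM (_ : 0 <= 1/2) (_ : 0 <= 1/2) h4 h4.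
  rewrite -expr2; lra.
rewrite leNgt; apply/negP => ha.
have h1 : m * t ^+ 2 <= p * t by rewrite /p expr2 mulrA.
have h2 : 16 * m ^+ 3 * (a - a ^+ 2) <= 16 * m ^+ 3 * (1 - a).
  apply: ler_wpM2l; first exact: ltW.
    have := sqr_ge0 (1 - a); lra.
have h3 : 16 * m ^+ 3 * (1 - a) < 16 * m ^+ 3 * t ^+ 2 by rewrite ltr_pM2l //; lra.
have h5 : m * (1 - t ^+ 2) < m * a by rewrite ltr_pM2l //; lra.
have h4 : 1 / 2 <= m * a - n by lra.
have := ler_pM (_ : 0 <= 1/2) (_ : 0 <= 1/2) h4 h4.
have e : (n - m * a) ^+ 2 = (m * a - n) * (m * a - n) by ring.
rewrite e in hk; lra.
Qed.

Unset Implicit Arguments.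

Lemma cB (R : realType) (r s : R) : (r - s)%:C%C = r%:C%C - s%:C%C :> R[i].
Proof. exact: rmorphB. Qed.
Lemma cM (R : realType) (r s : R) : (r * s)%:C%C = r%:C%C * s%:C%C :> R[i].
Proof. exact: rmorphM. Qed.
Lemma cX (R : realType) (r : R) n : (r ^+ n)%:C%C = r%:C%C ^+ n :> R[i].
Proof. exact: rmorphXn. Qed.
Lemma cN (R : realType) n : (n%:R : R)%:C%C = n%:R :> R[i].
Proof. exact: rmorph_nat. Qed.

Theorem theorem4 (R : realType) (is_real : bool) (M N : nat) :
  (0 < N)%N -> (N < M)%N ->
  exists c d : R[i],
    [/\ 0 < c, c <= d, d < 1 &
      forall Phi : 'M[R[i]]_(N, M),
        TC_maximizer (@scalars R is_real) Phi ->
        forall i : 'I_M, c <= fnorm Phi i <= d].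
Proof.
move=> hN hNM.
have hS : forall x y : R[i], scalars is_real x -> scalars is_real y ->
    scalars is_real ((x + y) * rr _) /\ scalars is_real ((y - x) * rr _).
  rewrite /scalars; case: is_real => /= x y hx hy; split => //.
  1-2: rewrite rpredM ?rpredD ?rpredN //; apply: ger0_real; exact: (rr_ge0 (R[i])).
have M0 : (0 < M)%N by apply: ltn_trans hN hNM.
set t : R := ((16 * M ^ 2)%N%:R)^-1.
have ht : 0 < t by rewrite /t invr_gt0 ltr0n muln_gt0 /= expn_gt0 M0.
have ht1 : t * 16 * (M%:R) ^+ 2 = 1.
  rewrite /t -mulrA -natrX -natrM mulVf // pnatr_eq0 -lt0n muln_gt0 /= expn_gt0 M0.
  done.
have hm1 : (1 : R) <= M%:R by rewrite ler1n.
have t16 : t <= 1 / 16.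
  have : 1 <= (M%:R : R) ^+ 2 by rewrite expr2; nra.
  nra.
set dd : R := 1 - t ^+ 2 / 2.
exists t%:C%C, dd%:C%C; split.
- by rewrite ltcE /= eqxx ht.
- rewrite lecE /= eqxx /= /dd; nra.
- rewrite ltcE /= eqxx /= /dd.
  have : 0 < t ^+ 2 by rewrite exprn_gt0.
  lra.
move=> Phi hmax i.
have hk := key hmax hS i.
have a0 : 0 <= fdot Phi i i by exact: fdot_diag_ge0.
have /complex_realP [ar har] := ger0_real a0.
rewrite har in hk a0.
have ar0 : 0 <= ar by rewrite -ler0c.
have hk' : (N%:R - M%:R * ar) ^+ 2 <= 16 * M%:R ^+ 3 * (ar - ar ^+ 2).
  by rewrite -lecR !(cX, cB, cM, cN).
have hn : (1 : R) <= N%:R by rewrite ler1n.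
have hm : (N%:R + 1 : R) <= M%:R by rewrite natr1 ler_nat.
have [h1 h2] := numeric hn hm ht ht1 hk'.
rewrite /fnorm -fdot_diag har.
have t0 : 0 <= t%:C%C by rewrite ler0c ltW.
have d0 : 0 <= dd%:C%C by rewrite ler0c /dd; nra.
apply/andP; split.
  rewrite -(sqrCK t0) ler_sqrtC ?nnegrE ?exprn_ge0 //.
  by rewrite -rmorphXn lecR.
rewrite -(sqrCK d0) ler_sqrtC ?nnegrE ?exprn_ge0 //.
rewrite -rmorphXn lecR /dd.
have := sqr_ge0 (t ^+ 2); nra.
Qed.
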